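(* Let $G$ be a finite group. Suppose there exist integers $1\le j<k$ such that $Z_{K_i}>Z_{K_{i-1}}$ and $[K_i,G]\le K_{i-1}$ for all integers $i$ with $j\le i\le k$. Then there is a prime $p$ such that $K_k/K_{j-1}$ and $Z_{K_k}/Z_{K_{j-1}}$ are $p$-groups. In particular, $K_i/K_{i-1}$ and $Z_{K_i}/Z_{K_{i-1}}$ are elementary abelian $p$-groups for every integer $i$ with $j\le i\le k$.
   Context: All groups are finite. For $\chi\in\mathrm{Irr}(G)$, the center of $\chi$ is $Z(\chi)=\{g\in G : |\chi(g)|=\chi(1)\}$. For a nonabelian group $H$, let $\mathcal{X}_H=\{\chi\in\mathrm{Irr}(H) : Z(\chi)>Z(H)\}$ (strict containment) and define $K(H)=\bigcap_{\chi\in\mathcal{X}_H}\ker(\chi)$; if $H$ is abelian, set $K(H)=H$. Define normal subgroups $K_i$ of $G$ by $K_0=1$ and $K_{i+1}/K_{i}=K(G/K_{i})$ for $i\ge 0$. For a normal subgroup $N$ of $G$, $Z_N$ is defined by $Z_N/N=Z(G/N)$. *)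

(* Defs.v *)
From mathcomp Require Import all_boot all_order all_algebra all_fingroup all_solvable all_field all_character.
Set Implicit Arguments. Unset Strict Implicit. Unset Printing Implicit Defensive.
Import GRing.Theory Num.Theory.
Local Open Scope group_scope.
Local Open Scope ring_scope.

Definition Kfun (rT : finGroupType) (H : {group rT}) : {group rT} :=
  if abelian H then H
  else (\bigcap_(i : Iirr H | 'Z(H) \proper ('Z('chi[H]_i%R))%CF) cfker 'chi[H]_i%R)%G.

(* K_0 = 1, K_{i+1}/K_i = K(G/K_i). *)
Fixpoint Kser (gT : finGroupType) (G : {group gT}) (i : nat) : {group gT} :=
  match i with
  | 0 => 1%G
  | i'.+1 => (coset (Kser G i') @*^-1 Kfun (G / Kser G i')%G)%G
  end.

(* Z_N / N = Z(G/N). *)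
Definition ZN (gT : finGroupType) (G N : {group gT}) : {group gT} :=
  (coset N @*^-1 'Z(G / N))%G.

(* Main.v *)
Require Import Defs.
From mathcomp Require Import all_boot all_order all_algebra all_fingroup all_solvable all_field all_character.
Local Open Scope group_scope.
Set Implicit Arguments. Unset Strict Implicit.

Lemma BZ (gT : finGroupType) (X : {group gT}) (x : gT) (q r : nat) :
  (0 < q)%N -> coprime q r -> x ^+ q \in X -> x ^+ r \in X -> x \in X.
Proof.
move=> q0 cqr Xq Xr.
have [a _ Hd] := Bezoutl r q0.
rewrite (eqP cqr) in Hd.
have E : (1 + a * r = q * ((1 + a * r) %/ q))%N by rewrite [(q * _)%N]mulnC divnK.
have H1 : x ^+ (1 + a * r) \in X by rewrite E expgM groupX.
have H2 : x ^+ (a * r) \in X by rewrite mulnC expgM groupX.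
by rewrite expgD expg1 (groupMr _ H2) in H1.
Qed.

Lemma ZNP (gT : finGroupType) (G L : {group gT}) (x : gT) : L <| G ->
  reflect (x \in G /\ forall g, g \in G -> [~ x, g] \in L) (x \in ZN G L).
Proof.
move=> nsLG; have [sLG nLG] := andP nsLG.
rewrite /ZN /=; apply: (iffP morphpreP).
  case=> xN /centerP [xq cq]; split.
    by rewrite -(quotientGK nsLG); apply/morphpreP.
  move=> g Gg; have gN : g \in 'N(L) by apply: (subsetP nLG).
  apply: coset_idr; first by rewrite groupR.
  rewrite morphR //; apply/eqP/commgP; apply: cq.
  by rewrite mem_quotient.
case=> Gx cx; have xN : x \in 'N(L) by apply: (subsetP nLG).
split => //; apply/centerP; split; first by rewrite mem_quotient.
move=> _ /morphimP [g gN Gg ->]; apply/commgP/eqP.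
by rewrite -morphR //; apply: coset_id (cx g Gg).
Qed.
Arguments ZNP {gT G L x}.

Lemma ZN_normal (gT : finGroupType) (G L : {group gT}) : L <| G -> ZN G L <| G.
Proof.
move=> nsLG; rewrite /ZN /= -{2}(quotientGK nsLG) cosetpre_normal.
exact: center_normal.
Qed.

Lemma ZN_sub (gT : finGroupType) (G L : {group gT}) : L <| G -> ZN G L \subset G.
Proof. by move/ZN_normal/andP=> []. Qed.

Lemma ZN_mono (gT : finGroupType) (G L1 L2 : {group gT}) :
  L1 <| G -> L2 <| G -> L1 \subset L2 -> ZN G L1 \subset ZN G L2.
Proof.
move=> n1 n2 s12; apply/subsetP=> x /(ZNP n1) [Gx cx].
apply/(ZNP n2); split=> // g Gg; exact: (subsetP s12) (cx g Gg).
Qed.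

Lemma ZN_comm (gT : finGroupType) (G L : {group gT}) (x g : gT) :
  L <| G -> x \in ZN G L -> g \in G -> [~ x, g] \in L.
Proof. by move=> nsLG /(ZNP nsLG) [_ cx] /cx. Qed.

Lemma commZN (gT : finGroupType) (G L : {group gT}) :
  L <| G -> [~: ZN G L, G] \subset L.
Proof.
move=> nsLG; rewrite gen_subG; apply/subsetP=> _ /imset2P [x g Zx Gg ->].
exact: ZN_comm Zx Gg.
Qed.

Lemma sub_ZN (gT : finGroupType) (G L M : {group gT}) :
  L <| G -> M \subset G -> [~: M, G] \subset L -> M \subset ZN G L.
Proof.
move=> nsLG sMG sC; apply/subsetP=> x Mx; apply/(ZNP nsLG); split.
  exact: (subsetP sMG).
by move=> g Gg; apply: (subsetP sC); apply: mem_commg.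
Qed.

Lemma ZN_cfcenter (gT : finGroupType) (G : {group gT}) (i : Iirr G) :
  ZN G (cfker ('chi_i)%R) \subset 'Z(('chi_i)%R)%CF.
Proof.
apply/subsetP=> x /morphpreP [xN]; rewrite /= -cfcenter_eq_center => xZ.
rewrite -(quotientGK (cfker_center_normal ('chi_i)%R)).
by apply/morphpreP; split.
Qed.

Lemma Pprop (gT : finGroupType) (G N : {group gT}) (i : Iirr G) :
  N <| G -> N \subset cfker ('chi_i)%R ->
  ~~ (coset N @*^-1 Kfun (G / N)%G \subset cfker ('chi_i)%R) ->
  'Z(('chi_i)%R)%CF \subset ZN G N.
Proof.
move=> nsNG sNK; have [sNG nNG] := andP nsNG.
rewrite /Kfun; case: ifP => [abQ _ | nabQ nMK].
  apply/subsetP=> x Zx; have Gx := subsetP (cfcenter_sub _) x Zx.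
  by rewrite /ZN /= (center_idP abQ) quotientGK.
set psi := ('chi_(quo_Iirr N i))%R.
have psiE : psi = (('chi_i)%R / N)%CF by apply: quo_IirrE.
have nsNK : N <| cfker ('chi_i)%R := normalS sNK (cfker_sub _) nsNG.
have nprop : ~~ ('Z(G / N) \proper 'Z(psi)%CF).
  apply: contra nMK => pr.
  rewrite -(quotientGK nsNK) cosetpreSK.
  apply: subset_trans (bigcap_inf (quo_Iirr N i) pr) _.
  by rewrite /= quo_IirrE // cfker_quo.
have sub : 'Z(G / N) \subset 'Z(psi)%CF.
  by rewrite -cap_cfcenter_irr; apply: bigcap_inf.
have eqZ : 'Z(G / N) = 'Z(psi)%CF.
  by apply/eqP; move: nprop; rewrite properEneq sub andbT negbK.
apply/subsetP=> x Zx; have Gx := subsetP (cfcenter_sub _) x Zx.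
apply/morphpreP; split; first exact: (subsetP nNG).
rewrite /= eqZ irr_cfcenterE ?mem_quotient // -/psi psiE cfQuoE // cfQuo1.
by rewrite -irr_cfcenterE.
Qed.

Lemma stepA (gT : finGroupType) (G N L : {group gT}) :
  N <| G -> L <| G -> N \subset L ->
  ~~ (coset N @*^-1 Kfun (G / N)%G \subset L) -> ZN G L \subset ZN G N.
Proof.
set M := coset N @*^-1 _ => nsNG nsLG sNL nML.
have [i /andP [sLK nMK]] : exists i : Iirr G,
    (L \subset cfker ('chi_i)%R) && ~~ (M \subset cfker ('chi_i)%R).
  case: (boolP [exists i : Iirr G, (L \subset cfker ('chi_i)%R) && ~~ (M \subset cfker ('chi_i)%R)]).
    by move/existsP.
  move/existsPn=> none; case/negP: nML.
  rewrite -(cap_cfker_normal nsLG); apply/bigcapsP=> i sLi.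
  by move: (none i); rewrite sLi /= negbK.
apply: subset_trans (ZN_mono nsLG (cfker_normal _) sLK) _.
apply: subset_trans (ZN_cfcenter i) _.
apply: Pprop => //; exact: subset_trans sNL sLK.
Qed.

Lemma Kfun_normal (rT : finGroupType) (H : {group rT}) : Kfun H <| H.
Proof.
rewrite /Kfun; case: ifP => ab; first exact: normal_refl.
apply/andP; split.
  have pr : 'Z(H) \proper 'Z(('chi[H]_0)%R)%CF.
    apply: (proper_sub_trans (B := H)).
      by rewrite properEneq center_sub andbT; apply/eqP => /center_idP; rewrite ab.
    apply/subsetP=> x Hx; rewrite irr_cfcenterE // irr0 !cfun1E Hx group1.
    by rewrite Num.Theory.normr1.
  apply/subsetP=> x /bigcapP /(_ 0%R pr); by rewrite /= cfker_irr0.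
apply: norms_bigcap; apply/bigcapsP=> i _; exact: normal_norm (cfker_normal _).
Qed.

Lemma Kser_normal (gT : finGroupType) (G : {group gT}) i : Kser G i <| G.
Proof.
elim: i => [|i IH] /=; first exact: normal1.
rewrite -[X in _ <| X](quotientGK IH) cosetpre_normal; exact: Kfun_normal.
Qed.

Lemma Kser_sub (gT : finGroupType) (G : {group gT}) i : Kser G i \subset Kser G i.+1.
Proof. exact: sub_cosetpre. Qed.

Lemma cosetm_id (gT : finGroupType) (N : {group gT}) (x : gT) :
  x \in N -> coset_morphism N x = 1.
Proof. exact: coset_id. Qed.

Lemma memN_coset (gT : finGroupType) (G N : {group gT}) (x : gT) :
  N <| G -> x \in G -> (x \in N) = (coset N x == 1).
Proof.
move=> /andP [_ nNG] Gx; have xN := subsetP nNG x Gx.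
apply/idP/eqP; [exact: coset_id | exact: coset_idr].
Qed.

Lemma cosetN_comm (gT : finGroupType) (G N : {group gT}) (x y : gT) :
  N <| G -> x \in ZN G N -> y \in G -> commute (coset N x) (coset N y).
Proof.
move=> nsNG Zx Gy; have [sNG nNG] := andP nsNG.
have Gx := subsetP (ZN_sub nsNG) x Zx.
apply/commgP; rewrite -morphR ?(subsetP nNG) //.
by apply/eqP; apply: coset_id; exact: ZN_comm Zx Gy.
Qed.

Lemma pow_comm (gT : finGroupType) (G N : {group gT}) (x g : gT) n :
  N <| G -> x \in G -> g \in G -> [~ x, g] \in ZN G N ->
  coset N [~ x ^+ n, g] = coset N ([~ x, g] ^+ n).
Proof.
move=> nsNG Gx Gg Zc; have [sNG nNG] := andP nsNG.
have xN := subsetP nNG x Gx; have gN := subsetP nNG g Gg.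
rewrite morphR ?groupX // morphX // commXg; last first.
  rewrite -morphR //; apply: commute_sym; exact: cosetN_comm Zc Gx.
by rewrite morphX ?groupR // morphR.
Qed.

Lemma pow_commm (gT : finGroupType) (G N : {group gT}) (x g : gT) n :
  N <| G -> x \in G -> g \in G -> [~ x, g] \in ZN G N ->
  coset_morphism N [~ x ^+ n, g] = coset_morphism N ([~ x, g] ^+ n).
Proof. exact: pow_comm. Qed.

Lemma Lgroup (gT : finGroupType) (G N X : {group gT}) (p : nat) :
  N <| G -> X \subset ZN G N -> N \subset X ->
  exists L : {group gT},
    [/\ L <| G, N \subset L & forall x, (x \in L) = (x \in X) && (x ^+ p \in N)].
Proof.
move=> nsNG sXZ sNX; have [sNG nNG] := andP nsNG.
have sXG : X \subset G := subset_trans sXZ (ZN_sub nsNG).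
have gs : group_set [set x in X | x ^+ p \in N].
  apply/group_setP; split; first by rewrite inE group1 expg1n group1.
  move=> x y /setIdP [Xx Nx] /setIdP [Xy Ny]; rewrite inE groupM //=.
  have Gx := subsetP sXG x Xx; have Gy := subsetP sXG y Xy.
  rewrite (memN_coset nsNG) ?groupX ?groupM //.
  rewrite morphX ?morphM ?(subsetP nNG) ?groupM //.
  rewrite expgMn; last exact: cosetN_comm (subsetP sXZ x Xx) Gy.
  rewrite -!morphX ?(subsetP nNG) // (cosetm_id Nx) (cosetm_id Ny).
  by rewrite mulg1.
exists (Group gs); split.
- rewrite /normal /=; apply/andP; split.
    by apply/subsetP=> x /setIdP [Xx _]; exact: (subsetP sXG).
  change (G \subset 'N(Group gs)); rewrite -commg_subl gen_subG; apply/subsetP=> _ /imset2P [x g Lx Gg ->].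
  have Xx : x \in X by move: Lx; rewrite /= inE => /andP [].
  have Nc : [~ x, g] \in N := ZN_comm nsNG (subsetP sXZ x Xx) Gg.
  by rewrite /= inE (subsetP sNX) // groupX.
- by apply/subsetP=> x Nx; rewrite /= inE (subsetP sNX) // groupX.
- by move=> x; rewrite /= inE.
Qed.

Definition StepA (gT : finGroupType) (G N M : {group gT}) :=
  forall L : {group gT}, L <| G -> N \subset L -> ~~ (M \subset L) ->
    ZN G L \subset ZN G N.

Definition LayerP (gT : finGroupType) (G N M : {group gT}) (p : nat) :=
  prime p /\ (forall m, m \in M -> m ^+ p \in N) /\
  (forall y, y \in ZN G M -> y ^+ p \in ZN G N).

Lemma layer (gT : finGroupType) (G N M : {group gT}) :
  N <| G -> M <| G -> N \subset M -> StepA G N M ->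
  [~: M, G] \subset N -> ZN G N \proper ZN G M ->
  exists p, LayerP G N M p.
Proof.
move=> nsNG nsMG sNM hA cMG prZ.
have [sNG nNG] := andP nsNG; have [sMG nMG] := andP nsMG.
have nsZ0 := ZN_normal nsNG.
have sMZ0 : M \subset ZN G N := sub_ZN nsNG sMG cMG.
have [_ [y Z1y nZ0y]] := properP prZ.
have Gy : y \in G := subsetP (ZN_sub nsMG) y Z1y.
have yN : y \in 'N(ZN G N) := subsetP (normal_norm nsZ0) y Gy.
set c := coset (ZN G N) y.
have c1 : c != 1 by rewrite -(memN_coset nsZ0).
have n1 : (1 < #[c])%N.
  by rewrite ltn_neqAle eq_sym order_eq1 c1 order_gt0.
set n := #[c] in n1.
have pr := pdiv_prime n1; set p := pdiv n in pr.
have n0 : (0 < n)%N := ltnW n1.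
set t := (n %/ p)%N.
have tpos : (0 < t)%N by rewrite divn_gt0 ?prime_gt0 // pdiv_leq.
have tn : (t < n)%N := ltn_Pdiv (prime_gt1 pr) n0.
have ytZ : y ^+ t \notin ZN G N.
  rewrite (memN_coset nsZ0) ?groupX // morphX // -order_dvdn.
  by apply/negP => /(dvdn_leq tpos); rewrite leqNgt tn.
have ynZ : y ^+ (t * p) \in ZN G N.
  rewrite divnK ?pdiv_dvd // (memN_coset nsZ0) ?groupX // morphX //.
  by rewrite expg_order.
have [L [nsLG sNL memL]] := Lgroup p nsNG sMZ0 sNM.
have yL : y ^+ t \in ZN G L.
  apply/(ZNP nsLG); split; first exact: groupX.
  move=> g Gg; have Mc : [~ y ^+ t, g] \in M := ZN_comm nsMG (groupX t Z1y) Gg.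
  rewrite memL Mc /= (memN_coset nsNG) ?groupX ?(subsetP sMG) //.
  rewrite -(@pow_comm _ G N _ _ p nsNG) ?groupX ?(subsetP sMZ0) // -expgM.
  by apply/eqP; apply: coset_id; apply: ZN_comm Gg.
have sML : M \subset L.
  apply: contraR ytZ => nML; exact: (subsetP (hA L nsLG sNL nML)).
exists p; split => //; split.
  by move=> m Mm; have := subsetP sML m Mm; rewrite memL => /andP [].
move=> z Z1z; have Gz := subsetP (ZN_sub nsMG) z Z1z.
apply/(ZNP nsNG); split; first exact: groupX.
move=> g Gg; have Mc : [~ z, g] \in M := ZN_comm nsMG Z1z Gg.
rewrite (memN_coset nsNG) ?groupR ?groupX // (@pow_comm _ G N _ _ p nsNG) ?(subsetP sMZ0) //.
have := subsetP sML _ Mc; rewrite memL => /andP [_ Np].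
by apply/eqP; apply: coset_id.
Qed.

Lemma cross (gT : finGroupType) (G N M M' : {group gT}) (q r : nat) :
  N <| G -> M <| G -> M' <| G -> N \subset M -> M \subset M' -> StepA G N M ->
  [~: M, G] \subset N -> [~: M', G] \subset M ->
  ZN G N \proper ZN G M -> ZN G M \proper ZN G M' ->
  LayerP G N M q -> LayerP G M M' r -> q = r.
Proof.
move=> nsNG nsMG nsM'G sNM sMM' hA cM cM' prZ1 prZ2 [pq [hq1 hq2]] [pr [hr1 hr2]].
apply/eqP; apply: contraT => nqr.
have cqr : coprime q r by rewrite prime_coprime // dvdn_prime2.
have q0 := prime_gt0 pq.
have [sNG nNG] := andP nsNG; have [sMG nMG] := andP nsMG.
have [sM'G nM'G] := andP nsM'G.
have sMZ0 : M \subset ZN G N := sub_ZN nsNG sMG cM.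
have sM'Z1 : M' \subset ZN G M := sub_ZN nsMG sM'G cM'.
have sM'Z0 : M' \subset ZN G N.
  apply/subsetP=> x M'x; apply: (BZ q0 cqr).
    exact: hq2 (subsetP sM'Z1 x M'x).
  exact: (subsetP sMZ0) (hr1 x M'x).
have [L [nsLG sNL memL]] := Lgroup r nsNG sM'Z0 (subset_trans sNM sMM').
have [_ [w Z2w nZ1w]] := properP prZ2.
have Gw : w \in G := subsetP (ZN_sub nsM'G) w Z2w.
have wL : w ^+ q \in ZN G L.
  apply/(ZNP nsLG); split; first exact: groupX.
  move=> g Gg; have M'c : [~ w ^+ q, g] \in M' := ZN_comm nsM'G (groupX q Z2w) Gg.
  rewrite memL M'c /= (memN_coset nsNG) ?groupX ?(subsetP sM'G) //.
  have M'c1 : [~ w, g] \in M' := ZN_comm nsM'G Z2w Gg.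
  rewrite morphX ?(subsetP nNG) ?(subsetP sM'G) //.
  rewrite (@pow_commm _ G N _ _ q nsNG) ?(subsetP sM'Z0) //.
  rewrite -morphX ?(subsetP nNG) ?groupX ?(subsetP sM'G) //.
  rewrite -expgM mulnC expgM.
  by apply/eqP; apply: coset_id; apply: hq1; apply: hr1.
have nMN : ~~ (M \subset N).
  apply: contraL prZ1 => sMN; by rewrite properE (ZN_mono nsMG nsNG sMN) andbF.
have nML : ~~ (M \subset L).
  have [m Mm nNm] := subsetPn nMN.
  apply/negP => sML; case/negP: nNm.
  have := subsetP sML m Mm; rewrite memL => /andP [_ Nr].
  exact: (BZ q0 cqr (hq1 m Mm) Nr).
have wZ0 : w ^+ q \in ZN G N := subsetP (hA L nsLG sNL nML) _ wL.
case/negP: nZ1w; apply: (BZ q0 cqr).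
  exact: (subsetP (proper_sub prZ1)).
exact: hr2.
Qed.

Lemma pgroup_quo (gT : finGroupType) (A B : {group gT}) (p e : nat) :
  prime p -> (forall x, x \in A -> x ^+ (p ^ e) \in B) -> p.-group (A / B).
Proof.
move=> pp hx; rewrite -pnat_exponent.
apply: (@pnat_dvd _ (p ^ e)); last by rewrite pnatX pnat_id.
apply/exponentP=> _ /morphimP [x xN Ax ->].
by rewrite -morphX //; apply: coset_id; apply: hx.
Qed.

Lemma abelem_quo (gT : finGroupType) (A B : {group gT}) (p : nat) :
  prime p -> A^`(1) \subset B -> (forall x, x \in A -> x ^+ p \in B) ->
  p.-abelem (A / B).
Proof.
move=> pp sD hx; apply/(abelemP pp); split; first exact: sub_der1_abelian.
move=> _ /morphimP [x xN Ax ->].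
by rewrite -morphX //; apply: coset_id; apply: hx.
Qed.

Lemma stepA_K (gT : finGroupType) (G : {group gT}) i :
  StepA G (Kser G i) (Kser G i.+1).
Proof.
move=> L nsLG sNL nML; exact: stepA (Kser_normal G i) nsLG sNL nML.
Qed.

Unset Implicit Arguments.

Theorem theoremF (gT : finGroupType) (G : {group gT}) (j k : nat) :
  (1 <= j)%N -> (j < k)%N ->
  (forall i : nat, (j <= i <= k)%N ->
     ZN G (Kser G i.-1) \proper ZN G (Kser G i) /\
     [~: Kser G i, G] \subset Kser G i.-1) ->
  exists p : nat,
    [/\ prime p,
        p.-group (Kser G k / Kser G j.-1),
        p.-group (ZN G (Kser G k) / ZN G (Kser G j.-1)),
        (forall i : nat, (j <= i <= k)%N -> p.-abelem (Kser G i / Kser G i.-1))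
      & (forall i : nat, (j <= i <= k)%N ->
           p.-abelem (ZN G (Kser G i) / ZN G (Kser G i.-1)))].
Proof.
case: j => [//|j0] _ jk H.
have Hi d : (j0 + d < k)%N ->
    ZN G (Kser G (j0 + d)) \proper ZN G (Kser G (j0 + d).+1) /\
    [~: Kser G (j0 + d).+1, G] \subset Kser G (j0 + d).
  move=> lt; apply: (H (j0 + d).+1).
  by rewrite ltnS leq_addr lt.
have LPd d : (j0 + d < k)%N ->
    exists p, LayerP G (Kser G (j0 + d)) (Kser G (j0 + d).+1) p.
  move/Hi => [pr cm].
  apply: layer => //; [exact: Kser_normal | exact: Kser_normal | exact: Kser_sub | exact: stepA_K].
have lt0 : (j0 + 0 < k)%N by rewrite addn0 ltnW.
have [p LP0] := LPd 0%N lt0.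
have LP d : (j0 + d < k)%N -> LayerP G (Kser G (j0 + d)) (Kser G (j0 + d).+1) p.
  elim: d => [|d IH] lt; first exact: LP0.
  have lt' : (j0 + d < k)%N by apply: ltnW; rewrite -addnS.
  have [r LPr] := LPd _ lt.
  have HA := Hi d lt'; have HB := Hi d.+1 lt.
  rewrite addnS in LPr HB *.
  have := cross (Kser_normal G _) (Kser_normal G _) (Kser_normal G _)
    (Kser_sub G _) (Kser_sub G _) (@stepA_K _ G _) HA.2 HB.2 HA.1 HB.1 (IH lt') LPr.
  by move=> ->.
have pp : prime p by case: LP0.
have EK d : (j0 + d <= k)%N -> forall x, x \in Kser G (j0 + d) -> x ^+ (p ^ d) \in Kser G j0.
  elim: d => [|d IH] le x Kx; first by rewrite addn0 in Kx; rewrite expn0 expg1.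
  have lt : (j0 + d < k)%N by rewrite addnS in le.
  have [_ [h1 _]] := LP d lt.
  rewrite expnS expgM; apply: IH (ltnW lt) _ _; apply: h1.
  by rewrite -addnS.
have EZ d : (j0 + d <= k)%N ->
    forall x, x \in ZN G (Kser G (j0 + d)) -> x ^+ (p ^ d) \in ZN G (Kser G j0).
  elim: d => [|d IH] le x Kx; first by rewrite addn0 in Kx; rewrite expn0 expg1.
  have lt : (j0 + d < k)%N by rewrite addnS in le.
  have [_ [_ h2]] := LP d lt.
  rewrite expnS expgM; apply: IH (ltnW lt) _ _; apply: h2.
  by rewrite -addnS.
have ke : k = (j0 + (k - j0))%N by rewrite subnKC // (ltnW (ltnW jk)).
exists p; split => //=.
- have := EK (k - j0)%N; rewrite -ke => /(_ (leqnn k)) hK.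
  exact: pgroup_quo pp hK.
- have := EZ (k - j0)%N; rewrite -ke => /(_ (leqnn k)) hK.
  exact: pgroup_quo pp hK.
- case=> [//|i0] /andP [ji ik] /=.
  have ie : i0 = (j0 + (i0 - j0))%N by rewrite subnKC.
  rewrite ie in ik *; have [_ [h1 _]] := LP _ ik.
  apply: abelem_quo pp _ h1.
  rewrite derg1; apply: subset_trans (Hi _ ik).2.
  by apply: commgS; apply: normal_sub (Kser_normal _ _).
- case=> [//|i0] /andP [ji ik] /=.
  have ie : i0 = (j0 + (i0 - j0))%N by rewrite subnKC.
  rewrite ie in ik *; have [_ [_ h2]] := LP _ ik.
  apply: abelem_quo pp _ h2.
  have nsN := Kser_normal G (j0 + (i0 - j0)).
  have nsM := Kser_normal G (j0 + (i0 - j0)).+1.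
  rewrite derg1; apply: subset_trans (commgS _ (ZN_sub nsM)) _.
  apply: subset_trans (commZN nsM) _.
  apply: sub_ZN nsN (normal_sub nsM) (Hi _ ik).2.
Qed.
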